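(* A Hausdorff topological space $\langle X,\tau\rangle$ is a continuous open image of the Sorgenfrey line $\mathbb{S}$ (i.e. there is a continuous open surjection $\mathbb{S}\to\langle X,\tau\rangle$) if and only if there exists a Sorgenfrey base for $\langle X,\tau\rangle$.
   Context: The Sorgenfrey line $\mathbb{S}$ is $\mathbb{R}$ with the topology generated by $\{[a,b):a,b\in\mathbb{R}\}$. Notation: $\omega=\{0,1,2,\dots\}$, each $n\in\omega$ is identified with $\{0,\dots,n-1\}$; ${}^{<\omega}\omega$ is the set of finite sequences of naturals, ${}^\omega\omega$ the set of infinite ones; $\mathrm{lh}(s)$ is the length; $s\sqsubseteq t$ means $s=t\upharpoonright \mathrm{lh}(s)$, $s\sqsubset t$ means $s\sqsubseteq t$, $s\neq t$; $a^\frown k$ is $a$ extended by $k$. For $a,b\in{}^{<\omega}\omega\cup{}^\omega\omega$: $a\triangleleft b$ iff there is $n$ (in the domains of both) with $a\upharpoonright n=b\upharpoonright n$ and $a(n)<b(n)$; $a\trianglelefteq b$ iff $a\triangleleft b$ or $a=b$. A Souslin scheme on a set $X$ is a family $\mathbf V=\langle V_a\rangle_{a\in{}^{<\omega}\omega}$ of subsets of $X$. For $p\in{}^\omega\omega$, $\mathrm{fruit}(\mathbf V,p)=\bigcap_n V_{p\upharpoonright n}$. $\mathbf V$ is covering if $V_{\langle\rangle}=X$ and $V_a=\bigcup_n V_{a^\frown n}$ for all $a$; complete if $\mathrm{fruit}(\mathbf V,q)\ne\emptyset$ for all $q\in{}^\omega\omega$; open (on a space $\langle X,\tau\rangle$)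 if all $V_a\in\tau$. For $x\in X$, $q\in{}^\omega\omega$ is a branch of $x$ if $x\in\mathrm{fruit}(\mathbf V,q)$; $\mathrm{branches}(\mathbf V,x)$ is the set of branches of $x$. For $q\in{}^\omega\omega$, $n\in\omega$: $\mathrm{rsequences}(q,n)=\{p\in{}^\omega\omega: q\triangleleft p,\ q\upharpoonright n=p\upharpoonright n\}$ and $\mathrm{cut}(\mathbf V,q,n)=\bigcup\{\mathrm{fruit}(\mathbf V,p):p\in\mathrm{rsequences}(q,n)\}$. A branch $q$ of $x$ is a $\tau$-base branch of $x$ if $\{\mathrm{cut}(\mathbf V,q,m)\cup\{x\}:m\in\omega\}$ is an open neighborhood base at $x$ in $\langle X,\tau\rangle$; $\mathrm{BB}(\mathbf V,x,\tau)$ denotes the set of $\tau$-base branches of $x$. A Sorgenfrey base for a Hausdorff space $\langle X,\tau\rangle$ is an open complete covering Souslin scheme $\mathbf V$ on $\langle X,\tau\rangle$ such that (S1) for every $x\in X$, every $q\in\mathrm{branches}(\mathbf V,x)$ and every $n\in\omega$ there is $t\in\mathrm{BB}(\mathbf V,x,\tau)$ with $t\upharpoonright n=q\upharpoonright n$; and (S2) for every $q\in{}^\omega\omega$ there is $z\in X$ with $q\in\mathrm{BB}(\mathbf V,z,\tau)$. *)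

(* Defs.v *)
From HB Require Import structures.
From mathcomp Require Import all_boot all_order all_algebra.
From mathcomp Require Import all_classical all_reals all_analysis.
From mathcomp Require Import Rstruct Rstruct_topology.
Set Implicit Arguments. Unset Strict Implicit. Unset Printing Implicit Defensive.
Import Order.TTheory GRing.Theory Num.Theory.
Local Open Scope classical_set_scope.
Local Open Scope ring_scope.

Definition sorgenfrey_open (U : set Rdefinitions.R) : Prop :=
  forall x, U x -> exists b : Rdefinitions.R, x < b /\ [set y | x <= y < b] `<=` U.

(* Finite sequences of naturals: seq nat; infinite ones: nat -> nat.
   The restriction p|n is mkseq p n. *)
Definition restr (p : nat -> nat) (n : nat) : seq nat := mkseq p n.

Definition tri_lt (a b : nat -> nat) : Prop :=
  exists n, (forall i, (i < n)%N -> a i = b i) /\ (a n < b n)%N.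

Section Souslin.
Variable X : topologicalType.
Implicit Types (V : seq nat -> set X) (p q : nat -> nat) (x : X).

Definition fruit V p : set X := \bigcap_(n in [set: nat]) V (restr p n).

Definition covering_scheme V : Prop :=
  V [::] = [set: X] /\ forall a, V a = \bigcup_(n in [set: nat]) V (rcons a n).

Definition complete_scheme V : Prop := forall q, fruit V q !=set0.

Definition open_scheme V : Prop := forall a, open (V a).

Definition is_branch V x q : Prop := fruit V q x.

Definition rsequences q (n : nat) : set (nat -> nat) :=
  [set p | tri_lt q p /\ restr q n = restr p n].

Definition cut V q (n : nat) : set X :=
  \bigcup_(p in rsequences q n) fruit V p.

Definition base_branch V x q : Prop :=
  is_branch V x q /\
  (forall m, open (cut V q m `|` [set x])) /\
  (forall U, nbhs x U -> exists m, cut V q m `|` [set x] `<=` U).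

Definition sorgenfrey_base V : Prop :=
  [/\ open_scheme V, complete_scheme V, covering_scheme V,
      (forall x q n, is_branch V x q ->
         exists t, base_branch V x t /\ restr t n = restr q n)
    & (forall q, exists z, base_branch V z q)].

End Souslin.

Definition continuous_open_image_of_sorgenfrey (X : topologicalType) : Prop :=
  exists f : Rdefinitions.R -> X,
    [/\ (forall W : set X, open W -> sorgenfrey_open (f @^-1` W)),
        (forall U, sorgenfrey_open U -> open (f @` U))
      & forall y : X, exists x, f x = y].

(* Main.v *)
Require Import Defs.
From mathcomp Require Import all_boot all_order all_algebra all_classical all_reals all_analysis.
From mathcomp Require Import Rstruct Rstruct_topology lra.
Set Implicit Arguments. Unset Strict Implicit. Unset Printing Implicit Defensive.
Import Order.TTheory GRing.Theory Num.Theory.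
Local Open Scope classical_set_scope.
Local Open Scope ring_scope.

Local Notation R := Rdefinitions.R.

Definition e (n : nat) : R := (2%:R ^+ n)^-1.

Lemma e_gt0 n : 0 < e n.
Proof. by rewrite /e invr_gt0 exprn_gt0. Qed.

Lemma eS n : e n.+1 = e n / 2.
Proof. by rewrite /e exprS invfM mulrC. Qed.

Lemma e0 : e 0 = 1.
Proof. by rewrite /e expr0 invr1. Qed.

Lemma e_le n m : (n <= m)%N -> e m <= e n.
Proof.
elim: m => [|m IH]; first by rewrite leqn0 => /eqP ->.
rewrite leq_eqVlt => /orP [/eqP -> //|]; rewrite ltnS => /IH.
have := e_gt0 m; rewrite eS; lra.
Qed.

Lemma e_small (eps : R) : 0 < eps -> exists k, e k < eps.
Proof.
move=> he.
have h0 : 0 <= eps^-1 by rewrite invr_ge0 ltW.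
have := archi_boundP h0; set N := Num.Def.archi_bound _ => hN.
exists N.
have hN2 : (N%:R : R) < 2%:R ^+ N.
  by rewrite -natrX ltr_nat ltn_expl.
have hpos : 0 < (2%:R : R) ^+ N by rewrite exprn_gt0.
rewrite /e -(invrK eps) ltf_pV2 ?posrE ?invr_gt0 //.
exact: lt_trans hN hN2.
Qed.

Lemma e_exists (v : R) : v < 1 -> exists n, v < 1 - e n.+1.
Proof.
move=> hv; have [|k hk] := @e_small (1 - v); first by lra.
exists k; have := e_le (leqnSn k); lra.
Qed.

Definition nf (v : R) : nat :=
  match pselect (exists n, v < 1 - e n.+1) with
  | left H => ex_minn H
  | right _ => 0%N
  end.

Lemma nf_bounds v : 0 <= v < 1 -> 1 - e (nf v) <= v < 1 - e (nf v).+1.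
Proof.
move=> /andP [h0 h1]; rewrite /nf; case: pselect => [H|[]]; last exact: e_exists.
case: ex_minnP => m Pm Hmin; rewrite Pm andbT.
case: m Pm Hmin => [|k] Pm Hmin; first by rewrite e0; lra.
rewrite leNgt; apply/negP => hk.
by have := Hmin k hk; rewrite ltnn.
Qed.

Lemma nf_spec v n : 1 - e n <= v < 1 - e n.+1 -> nf v = n.
Proof.
move=> /andP [h0 h1]; rewrite /nf; case: pselect => [H|[]]; last by exists n.
case: ex_minnP => m Pm Hmin.
have hmn := Hmin n h1.
apply/eqP; rewrite eqn_leq hmn /=; rewrite leqNgt; apply/negP => hlt.
have := e_le hlt; lra.
Qed.

Definition wf (v : R) : R := (v - (1 - e (nf v))) / e (nf v).+1.

Definition Sm (n : nat) (w : R) : R := 1 - e n + w * e n.+1.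

Lemma S_bounds n w : 0 <= w < 1 -> 1 - e n <= Sm n w < 1 - e n.+1.
Proof.
move=> /andP [h0 h1]; rewrite /Sm.
have hp := e_gt0 n.+1; have := eS n.
have : 0 <= w * e n.+1 by rewrite mulr_ge0 // ltW.
have : w * e n.+1 < e n.+1 by rewrite -[X in _ < X]mul1r ltr_pM2r.
move=> *; apply/andP; split; lra.
Qed.

Lemma nfS n w : 0 <= w < 1 -> nf (Sm n w) = n.
Proof. by move=> h; apply: nf_spec; apply: S_bounds. Qed.

Lemma wfS n w : 0 <= w < 1 -> wf (Sm n w) = w.
Proof.
move=> h; rewrite /wf nfS // /Sm.
have hp := e_gt0 n.+1.
by rewrite addrAC subrr add0r mulfK // gt_eqF.
Qed.

Lemma wf_bounds v : 0 <= v < 1 -> 0 <= wf v < 1.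
Proof.
move=> h; have := nf_bounds h; set n := nf v => /andP [h0 h1].
have hp := e_gt0 n.+1; have := eS n => hs.
rewrite /wf -/n; apply/andP; split.
  by apply: divr_ge0; lra.
by rewrite ltr_pdivrMr // mul1r; lra.
Qed.

Lemma S_wf v : 0 <= v < 1 -> Sm (nf v) (wf v) = v.
Proof.
move=> h; rewrite /Sm /wf.
have hp := e_gt0 (nf v).+1.
by rewrite divfK ?gt_eqF //; lra.
Qed.

Lemma S_mono n w w' : w <= w' -> Sm n w <= Sm n w'.
Proof. by move=> h; rewrite /Sm lerD2l ler_pM2r // e_gt0. Qed.

Lemma S_smono n w w' : w < w' -> Sm n w < Sm n w'.
Proof. by move=> h; rewrite /Sm ltrD2l ltr_pM2r // e_gt0. Qed.

Lemma S_le n w w' : (Sm n w <= Sm n w') = (w <= w').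
Proof. by rewrite /Sm lerD2l ler_pM2r // e_gt0. Qed.

Lemma S_lt n w w' : (Sm n w < Sm n w') = (w < w').
Proof. by rewrite /Sm ltrD2l ltr_pM2r // e_gt0. Qed.

Lemma S1 n : Sm n 1 = 1 - e n.+1.
Proof. by rewrite /Sm mul1r eS; lra. Qed.

Lemma nf_mono v u : 0 <= v < 1 -> 0 <= u < 1 -> v <= u -> (nf v <= nf u)%N.
Proof.
move=> hv hu hvu; rewrite leqNgt; apply/negP => hlt.
have := nf_bounds hv; have := nf_bounds hu; have := e_le hlt; lra.
Qed.

Lemma wf_mono v u : nf v = nf u -> v <= u -> wf v <= wf u.
Proof.
move=> he h; rewrite /wf he ler_pM2r ?invr_gt0 ?e_gt0 //; lra.
Qed.

Lemma restrP (p q : nat -> nat) m :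
  restr p m = restr q m <-> (forall i, (i < m)%N -> p i = q i).
Proof.
split.
  by move=> H i hi; have := congr1 (fun s => nth 0%N s i) H; rewrite /= /restr !nth_mkseq.
move=> H; rewrite /restr; apply: (@eq_from_nth _ 0%N); first by rewrite !size_mkseq.
by move=> i; rewrite size_mkseq => hi; rewrite !nth_mkseq // H.
Qed.

Lemma restr_cons (p : nat -> nat) m :
  restr p m.+1 = p 0%N :: restr (fun i => p i.+1) m.
Proof.
rewrite /restr; apply: (@eq_from_nth _ 0%N); first by rewrite size_mkseq /= size_mkseq.
move=> i; rewrite size_mkseq => hi; rewrite nth_mkseq //.
by case: i hi => [|i] hi //=; rewrite nth_mkseq.
Qed.

Lemma restr_le (p q : nat -> nat) m k :
  (k <= m)%N -> restr p m = restr q m -> restr p k = restr q k.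
Proof.
move=> hk /restrP H; apply/restrP => i hi; apply: H; exact: leq_trans hi hk.
Qed.

Lemma size_restr p m : size (restr p m) = m.
Proof. exact: size_mkseq. Qed.

Lemma tri_lt_irr p : ~ tri_lt p p.
Proof. by case=> n [_]; rewrite ltnn. Qed.

Lemma tri_lt_asym p q : tri_lt p q -> ~ tri_lt q p.
Proof.
case=> n [H1 H2] [m [H3 H4]].
case: (ltngtP n m) => hnm.
- by move: H2; rewrite H3 // ltnn.
- by move: H4; rewrite H1 // ltnn.
- by subst m; move: (ltn_trans H2 H4); rewrite ltnn.
Qed.

Lemma tri_lt_agree q p m : tri_lt q p -> restr q m = restr p m ->
  exists k, [/\ (m <= k)%N, (forall i, (i < k)%N -> q i = p i) & (q k < p k)%N].
Proof.
case=> k [H1 H2] /restrP H3; exists k; split => //.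
by rewrite leqNgt; apply/negP => hk; move: H2; rewrite H3 // ltnn.
Qed.

Definition h (v : R) (k : nat) : nat := nf (iter k wf v).

Lemma restr_h v m : restr (h v) m.+1 = nf v :: restr (h (wf v)) m.
Proof.
rewrite restr_cons; congr (_ :: _); apply: eq_mkseq => i.
by rewrite /h iterSr.
Qed.

Lemma C_h m v : 0 <= v < 1 ->
  exists b, [/\ v < b, b <= 1 & forall u, v <= u < b -> restr (h u) m = restr (h v) m].
Proof.
elim: m v => [|m IH] v hv.
  by exists 1; split => //; move: hv => /andP [].
have [b0 [hb0 hb1 Hb]] := IH _ (wf_bounds hv).
have hw := wf_bounds hv.
exists (Sm (nf v) b0); split.
- by rewrite -{1}(S_wf hv) S_lt.
- have : Sm (nf v) b0 <= Sm (nf v) 1 by rewrite S_le.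
  rewrite S1; have := e_gt0 (nf v).+1; lra.
- move=> u /andP [hu1 hu2].
  have hvb := nf_bounds hv.
  have hSb : Sm (nf v) b0 <= Sm (nf v) 1 by rewrite S_le.
  move: hSb; rewrite S1 => hSb.
  have hnu : nf u = nf v by apply: nf_spec; apply/andP; split; lra.
  have hu : 0 <= u < 1 by apply/andP; split; have := e_gt0 (nf v).+1; lra.
  rewrite !restr_h hnu; congr (_ :: _); apply: Hb.
  apply/andP; split.
    rewrite -(S_le (nf v)) S_wf // -hnu S_wf //.
  by rewrite -(S_lt (nf v)) -{1}hnu S_wf.
Qed.

Lemma O_h m u v : 0 <= u < 1 -> 0 <= v < 1 ->
  restr (h u) m = restr (h v) m -> u < v + e m.
Proof.
elim: m u v => [|m IH] u v hu hv.
  by rewrite e0 => _; move: hu hv => /andP [? ?] /andP [? ?]; lra.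
rewrite !restr_h => -[hn ht].
have := IH _ _ (wf_bounds hu) (wf_bounds hv) ht => hw.
rewrite -(S_wf hu) -(S_wf hv) hn /Sm.
set a := e (nf v).+1.
have ha : 0 < a by apply: e_gt0.
have ha2 : a <= e 1 by apply: e_le.
have hm := e_gt0 m.
have h1 : (wf u - wf v) * a < e m * a by rewrite ltr_pM2r //; lra.
have h2 : e m * a <= e m * e 1 by rewrite ler_pM2l.
have : e m * e 1 = e m.+1 by rewrite eS e0 eS; lra.
move=> h3.
have : wf u * a - wf v * a = (wf u - wf v) * a by rewrite mulrBl.
lra.
Qed.

Lemma Ord_h k v u : 0 <= v < 1 -> 0 <= u < 1 -> v <= u ->
  restr (h v) k = restr (h u) k -> iter k wf v <= iter k wf u.
Proof.
elim: k v u => [|k IH] v u hv hu hvu //.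
rewrite !restr_h => -[hn ht]; rewrite !iterSr.
apply: IH => //; try exact: wf_bounds.
exact: wf_mono.
Qed.

Lemma iter_bounds k v : 0 <= v < 1 -> 0 <= iter k wf v < 1.
Proof. by elim: k => [|k IH] //= hv; apply: wf_bounds; apply: IH. Qed.

Lemma Mono_h v u : 0 <= v < 1 -> 0 <= u < 1 -> v < u -> tri_lt (h v) (h u).
Proof.
move=> hv hu hvu; apply: contrapT => Hn.
have Hall : forall k, restr (h v) k = restr (h u) k.
  elim=> [//|k IHk].
  rewrite /restr !mkseqS -!/(restr _ _) IHk; congr rcons.
  have hle : (h v k <= h u k)%N.
    apply: nf_mono; try exact: iter_bounds.
    by apply: Ord_h => //; apply: ltW.
  move: hle; rewrite leq_eqVlt => /orP [/eqP //|hlt].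
  by exfalso; apply: Hn; exists k; split => //; apply/restrP.
have [|k hk] := @e_small (u - v); first by lra.
have := O_h hu hv (esym (Hall k)); lra.
Qed.

Definition Sa (a : seq nat) (w : R) : R := foldr Sm w a.

Lemma S_ge0 n w : 0 <= w -> 0 <= Sm n w.
Proof.
move=> hw; rewrite /Sm; have := e_le (leq0n n); rewrite e0 => h1.
have : 0 <= w * e n.+1 by rewrite mulr_ge0 // ltW // e_gt0.
lra.
Qed.

Lemma S_le1 n w : w <= 1 -> Sm n w <= 1.
Proof.
move=> hw; have : Sm n w <= Sm n 1 by rewrite S_le.
rewrite S1; have := e_gt0 n.+1; lra.
Qed.

Lemma Sa_bounds a w : 0 <= w <= 1 -> 0 <= Sa a w <= 1.
Proof.
move=> /andP [h0 h1]; elim: a => [|n a IH] /=; first by rewrite h0 h1.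
by move: IH => /andP [? ?]; rewrite S_ge0 // S_le1.
Qed.

Lemma Sa_mono a w w' : w <= w' -> Sa a w <= Sa a w'.
Proof. by move=> h; elim: a => [|n a IH] //=; rewrite S_le. Qed.

Lemma Sa_smono a w w' : w < w' -> Sa a w < Sa a w'.
Proof. by move=> h; elim: a => [|n a IH] //=; rewrite S_lt. Qed.

Lemma Sa_cyl a v : Sa a 0 <= v < Sa a 1 -> restr (h v) (size a) = a.
Proof.
elim: a v => [|n a IH] v //= /andP [h0 h1].
have hb0 : 0 <= Sa a 0 <= 1 by apply: Sa_bounds; rewrite lexx ler01.
have hb1 : 0 <= Sa a 1 <= 1 by apply: Sa_bounds; rewrite lexx ler01.
have hS0 : Sm n 0 <= Sm n (Sa a 0) by rewrite S_le; case/andP: hb0.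
have hS1 : Sm n (Sa a 1) <= Sm n 1 by rewrite S_le; case/andP: hb1.
move: hS0 hS1; rewrite S1 {1}/Sm mul0r addr0 => hS0 hS1.
have hnv : nf v = n by apply: nf_spec; apply/andP; split; lra.
have hv : 0 <= v < 1.
  have := e_le (leq0n n); rewrite e0; have := e_gt0 n.+1; move=> *; apply/andP; split; lra.
rewrite restr_h hnv IH //.
have hv' : Sm n (wf v) = v by rewrite -{1}hnv S_wf.
by rewrite -(S_le n) -(S_lt n) hv' h0 h1.
Qed.

Lemma restrS p k : restr p k.+1 = rcons (restr p k) (p k).
Proof. exact: mkseqS. Qed.

Lemma Sa_rcons a n w : Sa (rcons a n) w = Sa a (Sm n w).
Proof. by rewrite /Sa foldr_rcons. Qed.

Lemma Sa_prefix p m1 j w0 : 0 <= w0 <= 1 ->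
  exists w, 0 <= w <= 1 /\ Sa (restr p (m1 + j)) w0 = Sa (restr p m1) w.
Proof.
elim: j w0 => [|j IH] w0 hw0; first by exists w0; rewrite addn0.
rewrite addnS restrS Sa_rcons; apply: IH.
move: hw0 => /andP [? ?]; by rewrite S_ge0 // S_le1.
Qed.

Lemma Surj_h p : exists v, 0 <= v < 1 /\ h v = p.
Proof.
pose E := [set x | exists k, x = Sa (restr p k) 0].
have h001 : 0 <= (0 : Rdefinitions.R) <= 1 by apply/andP; split; lra.
have hE0 : E !=set0 by exists (Sa (restr p 0) 0); exists 0%N.
have hEub : forall m, ubound E (Sa (restr p m) (Sm (p m) 1)).
  move=> m x [k ->].
  have /andP [h01a h01b] : 0 <= Sm (p m) 1 <= 1 by rewrite S_ge0 // S_le1.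
  case: (leqP k m) => hkm.
    have [w [/andP [hw0 hw1] hw]] := @Sa_prefix p k (m - k) 0 h001.
    rewrite (subnKC hkm) in hw.
    apply: le_trans (Sa_mono _ hw0) _.
    by rewrite -hw; apply: Sa_mono.
  have [w [/andP [hw0 hw1] hw]] := @Sa_prefix p m.+1 (k - m.+1) 0 h001.
  rewrite (subnKC hkm) in hw.
  by rewrite hw restrS Sa_rcons; apply: Sa_mono; rewrite S_le.
have hsup : has_sup E by split => //; exists (Sa (restr p 0) (Sm (p 0) 1)); exact: hEub.
set v := sup E.
have Hcyl : forall m, Sa (restr p m) 0 <= v < Sa (restr p m) 1.
  move=> m; apply/andP; split.
    by apply: sup_upper_bound => //; exists m.
  apply: le_lt_trans (ge_sup hE0 (hEub m)) _.
  by apply: Sa_smono; rewrite S1; have := e_gt0 (p m).+1; lra.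
have Hr : forall m, restr (h v) m = restr p m.
  by move=> m; have := Sa_cyl (Hcyl m); rewrite size_restr.
exists v; split; first by have := Hcyl 0%N.
apply: funext => i.
by have /restrP := Hr i.+1; apply.
Qed.

Definition enc (z : int) : nat :=
  match z with Posz n => n.*2 | Negz n => n.*2.+1 end.
Definition dec (k : nat) : int := if odd k then Negz k./2 else Posz k./2.

Lemma decK : cancel dec enc.
Proof.
move=> k; rewrite /dec; case E: (odd k) => /=;
by rewrite [in RHS](esym (odd_double_half k)) E ?add0n ?add1n.
Qed.

Lemma encK : cancel enc dec.
Proof.
by case=> n; rewrite /dec /enc /= ?odd_double ?doubleK //= uphalf_double.
Qed.

Definition fl (r : R) : int := Num.floor r.
Definition N0 (r : R) : nat := enc (fl r).
Definition W0 (r : R) : R := r - (fl r)%:~R.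

Definition H (r : R) (k : nat) : nat :=
  match k with 0%N => N0 r | k'.+1 => h (W0 r) k' end.

Lemma W0_bounds r : 0 <= W0 r < 1.
Proof.
have /andP [h1 h2] := floor_itv r; rewrite /W0 /fl.
move: h2; rewrite intrD => h2; apply/andP; split; lra.
Qed.

Lemma restr_H r m : restr (H r) m.+1 = N0 r :: restr (h (W0 r)) m.
Proof. by rewrite restr_cons. Qed.

Lemma N0_fl r u : N0 u = N0 r -> fl u = fl r.
Proof. by move=> E; rewrite -(encK (fl u)) -(encK (fl r)); congr dec. Qed.

Lemma fl_block r u : r <= u < (fl r)%:~R + 1 -> fl u = fl r.
Proof.
move=> /andP [h1 h2]; apply: floor_def; rewrite intrD.
have /andP [h3 h4] := floor_itv r; rewrite /fl in h2 *.
apply/andP; split; lra.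
Qed.

Lemma W0_diff r u : fl u = fl r -> W0 u - W0 r = u - r.
Proof. by move=> E; rewrite /W0 E; lra. Qed.

Lemma HSurj p : exists r, H r = p.
Proof.
have [v [hv Hv]] := Surj_h (fun i => p i.+1).
set z := dec (p 0%N).
have hfl : fl (z%:~R + v) = z.
  apply: floor_def; rewrite intrD; apply/andP; split; move: hv => /andP [? ?]; lra.
exists (z%:~R + v); apply: funext => -[|i] /=.
  by rewrite /N0 hfl decK.
rewrite /W0 hfl.
have -> : z%:~R + v - z%:~R = v by lra.
by rewrite Hv.
Qed.

Lemma HC r m : exists b, r < b /\ forall u, r <= u < b -> restr (H u) m = restr (H r) m.
Proof.
case: m => [|m].
  by exists (r + 1); split; [lra | move=> u _; rewrite /restr].
have [b1 [hb1 _ Hb1]] := C_h m (W0_bounds r).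
have hfl := floor_itv r; rewrite intrD -/(fl r) in hfl.
pose c1 : R := (fl r)%:~R + 1.
pose c2 : R := r + (b1 - W0 r).
have key : forall b, r < b -> b <= c1 -> b <= c2 -> exists b, r < b /\
   forall u, r <= u < b -> restr (H u) m.+1 = restr (H r) m.+1.
  move=> b hrb hb1' hb2'; exists b; split => // u /andP [hu1 hu2].
  have hfu : fl u = fl r by apply: fl_block; apply/andP; split; rewrite /c1 in hb1'; lra.
  rewrite !restr_H /N0 hfu; congr (_ :: _); apply: Hb1.
  have := W0_diff hfu; rewrite /c2 in hb2'; move=> hd; apply/andP; split; lra.
have hc1 : r < c1 by rewrite /c1; move: hfl => /andP [? ?]; lra.
have hc2 : r < c2 by rewrite /c2; lra.
case: (lerP c1 c2) => hc.
  by apply: (key c1).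
by apply: (key c2) => //; apply: ltW.
Qed.

Lemma HMono r u : r < u -> fl u = fl r -> tri_lt (H r) (H u).
Proof.
move=> hru hf.
have hw : W0 r < W0 u by have := W0_diff hf; lra.
have [k [Hk1 Hk2]] := Mono_h (W0_bounds r) (W0_bounds u) hw.
exists k.+1; split => //; case => [|i] hi //=; first by rewrite /N0 hf.
by apply: Hk1.
Qed.

Lemma HBack r u : tri_lt (H r) (H u) -> fl u = fl r -> r < u.
Proof.
move=> ht hf; case: (ltrgtP r u) => // hru.
  by exfalso; apply: (tri_lt_asym ht); apply: HMono.
by subst u; exfalso; apply: (tri_lt_irr ht).
Qed.

Lemma restr_N0 r u m : restr (H u) m.+1 = restr (H r) m.+1 -> fl u = fl r.
Proof. by rewrite !restr_H => -[/N0_fl]. Qed.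

Lemma HO r (eps : R) : 0 < eps -> exists m, (0 < m)%N /\
  forall u, restr (H u) m = restr (H r) m -> u < r + eps.
Proof.
move=> he; have [k hk] := e_small he; exists k.+1; split => // u E.
have hf := restr_N0 E.
move: E; rewrite !restr_H => -[_ E].
have := O_h (W0_bounds u) (W0_bounds r) E.
have := W0_diff hf; lra.
Qed.

Definition Aset (s : R) (m : nat) : set R :=
  [set u | u = s \/ (tri_lt (H s) (H u) /\ restr (H s) m = restr (H u) m)].

Lemma A_open s m : sorgenfrey_open (Aset s m).
Proof.
move=> x [->|[ht hr]].
  have [b [hb Hb]] := HC s m.+1; exists b; split => // w /andP [hw1 hw2].
  have E := Hb w (ltac:(apply/andP; split => //)).
  have hf := restr_N0 E.
  case: (eqVneq w s) => [->|hne]; first by left.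
  right; split.
    by apply: HMono => //; rewrite lt_neqAle eq_sym hne hw1.
  by apply: (restr_le (leqnSn m)); rewrite E.
have [k [hmk Hk1 Hk2]] := tri_lt_agree ht hr.
have [b [hb Hb]] := HC x k.+1; exists b; split => // w /andP [hw1 hw2].
have /restrP E := Hb w (ltac:(apply/andP; split => //)).
right; split.
  exists k; split; last by rewrite E.
  by move=> i hi; rewrite Hk1 // E // ltnW.
apply/restrP => i hi; rewrite Hk1 ?E //; [exact: ltnW (leq_trans hi hmk)|].
exact: leq_trans hi hmk.
Qed.

Lemma A_small s (eps : R) : 0 < eps -> exists m,
  forall u, Aset s m u -> s <= u < s + eps.
Proof.
move=> he; have [m [hm Hm]] := HO s he; exists m => u [->|[ht hr]].
  by apply/andP; split; lra.
have hu := Hm u (esym hr).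
case: m hm Hm hr => // m _ _ hr.
have hf := restr_N0 (esym hr).
have := HBack ht hf; move=> *; apply/andP; split; lra.
Qed.

Lemma A_self s m : Aset s m s.
Proof. by left. Qed.

Lemma A_rseq s m u : Aset s m u -> u <> s -> rsequences (H s) m (H u).
Proof. by move=> [->//|[ht hr]] _; split. Qed.

Definition cyl (a : seq nat) : set R := [set r | restr (H r) (size a) = a].

Lemma cylE a r : cyl a r = (restr (H r) (size a) = a).
Proof. by []. Qed.

Section Forward.
Variable X : topologicalType.
Variable f : R -> X.
Hypothesis fc : forall W : set X, open W -> sorgenfrey_open (f @^-1` W).
Hypothesis fo : forall U, sorgenfrey_open U -> open (f @` U).
Hypothesis fs : forall y : X, exists x, f x = y.

Definition Vf (a : seq nat) : set X := f @` cyl a.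

Lemma cyl_open a : sorgenfrey_open (cyl a).
Proof.
move=> u hu; have [b [hb Hb]] := HC u (size a); exists b; split => // w hw.
exact: (etrans (Hb w hw) hu).
Qed.

Lemma fruit_H s : fruit Vf (H s) (f s).
Proof. by move=> n _; exists s => //; rewrite /cyl size_restr. Qed.

Lemma key s m : Defs.cut Vf (H s) m `|` [set f s] = f @` Aset s m.
Proof.
apply/seteqP; split => y.
  case=> [[p [hp1 hp2] hy]|->]; last by exists s => //; left.
  have [k [hmk Hk1 Hk2]] := tri_lt_agree hp1 hp2.
  have [u hu <-] := hy k.+1 I.
  have /restrP {}hu : restr (H u) k.+1 = restr p k.+1 by move: hu; rewrite /cyl size_restr.
  exists u => //; right; split.
    exists k; split; last by rewrite hu.
    by move=> i hi; rewrite Hk1 // hu // ltnW.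
  apply/restrP => i hi; have hik : (i < k)%N := leq_trans hi hmk.
  by rewrite Hk1 // hu // ltnW.
move=> [u hu <-].
case: (pselect (u = s)) => [->|hne]; first by right.
by left; exists (H u); [exact: A_rseq | exact: fruit_H].
Qed.

Lemma baseH s : base_branch Vf (f s) (H s).
Proof.
split; first exact: fruit_H.
split; first by move=> m; rewrite key; apply: fo; apply: A_open.
move=> U; rewrite nbhsE => -[B [oB Bfs] BU].
have [b [hb Hb]] := fc oB Bfs.
have [|m Hm] := @A_small s (b - s); first by lra.
exists m; rewrite key => y [u hu <-]; apply: BU.
by apply: Hb; have := Hm u hu; move=> /andP [? ?]; apply/andP; split => //; lra.
Qed.

Lemma forward : sorgenfrey_base Vf.
Proof.
split.
- by move=> a; apply: fo; apply: cyl_open.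
- by move=> q; have [r <-] := HSurj q; exists (f r); apply: fruit_H.
- split.
    apply/seteqP; split => // y _; have [x <-] := fs y; exists x => //.
  move=> a; apply/seteqP; split => y.
    move=> [r hr <-]; exists (H r (size a)) => //; exists r => //.
    by rewrite cylE size_rcons restrS hr.
  move=> [n _ [r hr <-]]; exists r => //.
  by move: hr; rewrite !cylE size_rcons restrS => /rcons_inj [].
- move=> x q n hx; have [r hr <-] := hx n I.
  exists (H r); split; first exact: baseH.
  by move: hr; rewrite cylE size_restr.
- by move=> q; have [r <-] := HSurj q; exists (f r); apply: baseH.
Qed.

End Forward.

Section Backward.
Variable X : topologicalType.
Hypothesis hX : hausdorff_space X.
Variable V : seq nat -> set X.
Hypothesis HV : sorgenfrey_base V.

Lemma cut_mono q m1 m2 : (m1 <= m2)%N -> Defs.cut V q m2 `<=` Defs.cut V q m1.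
Proof.
move=> hm y [p [hp1 hp2] hy]; exists p => //; split => //.
exact: restr_le hm hp2.
Qed.

Lemma cut_ne q m : Defs.cut V q m !=set0.
Proof.
case: HV => _ hc _ _ _.
pose p := fun i => if i == m then (q m).+1 else q i.
have [y hy] := hc p; exists y, p => //; split.
  exists m; split; last by rewrite /p eqxx.
  by move=> i hi; rewrite /p (ltn_eqF hi).
by apply/restrP => i hi; rewrite /p (ltn_eqF hi).
Qed.

Lemma bb_uniq z z' q : base_branch V z q -> base_branch V z' q -> z = z'.
Proof.
move=> [_ [_ Hz]] [_ [_ Hz']]; apply: hX => A' B' hA hB.
have [m1 H1] := Hz _ hA; have [m2 H2] := Hz' _ hB.
have [y hy] := cut_ne q (maxn m1 m2).
exists y; split.
  by apply: H1; left; apply: (cut_mono (leq_maxl m1 m2)).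
by apply: H2; left; apply: (cut_mono (leq_maxr m1 m2)).
Qed.

Definition g (q : nat -> nat) : X :=
  proj1_sig (cid (match HV with And5 _ _ _ _ h2 => h2 q end)).

Lemma g_bb q : base_branch V (g q) q.
Proof. by rewrite /g; case: cid. Qed.

Lemma branch_exists x : exists q, fruit V q x.
Proof.
case: HV => _ _ [hT hcov] _ _.
pose c (a : seq nat) : nat :=
  match pselect (exists n, V (rcons a n) x) with
  | left Hn => proj1_sig (cid Hn) | right _ => 0%N end.
have hc : forall a, V a x -> V (rcons a (c a)) x.
  move=> a ha; rewrite /c; case: pselect => [Hn|Hn]; first by case: cid.
  exfalso; apply: Hn; move: ha; rewrite hcov => -[n _ hn]; by exists n.
pose a k := iter k (fun b => rcons b (c b)) [::].
have ha : forall k, V (a k) x.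
  elim=> [|k IH] /=; first by rewrite hT.
  exact: hc.
exists (fun k => c (a k)).
have hr : forall k, restr (fun k => c (a k)) k = a k.
  by elim=> [//|k IH]; rewrite restrS IH.
by move=> n _; rewrite hr.
Qed.

Definition fb (r : R) : X := g (H r).

Lemma backward : continuous_open_image_of_sorgenfrey X.
Proof.
have [_ _ _ hS1 _] := HV.
exists fb; split.
- move=> W oW s hs.
  have hn : nbhs (fb s) W by apply: open_nbhs_nbhs.
  have [_ [_ hb]] := g_bb (H s).
  have [m hm] := hb _ hn.
  have [b [hb1 Hb]] := A_open (A_self s m).
  exists b; split => // u hu; have hA := Hb u hu.
  case: (pselect (u = s)) => [->//|hne].
  apply: hm; left; exists (H u); first exact: A_rseq.
  by case: (g_bb (H u)).
- move=> U hU; rewrite openE => y [s hs <-].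
  have [b [hb1 Hb]] := hU s hs.
  have [|m Hm] := @A_small s (b - s); first by lra.
  have [_ [ho _]] := g_bb (H s).
  rewrite /interior nbhsE; exists (Defs.cut V (H s) m `|` [set fb s]).
    by split => //; right.
  move=> y' [[p [hp1 hp2] hy']| ->]; last by exists s.
  have [k [hmk Hk1 Hk2]] := tri_lt_agree hp1 hp2.
  have [t [tb ht]] := hS1 y' p k.+1 hy'.
  have [u hu] := HSurj t.
  have hgt : g t = y' by apply: (bb_uniq (g_bb t)).
  have /restrP ht' := ht.
  have hA : Aset s m u.
    right; rewrite hu; split.
      exists k; split; last by rewrite ht'.
      by move=> i hi; rewrite Hk1 // ht' // ltnW.
    apply/restrP => i hi; have hik : (i < k)%N := leq_trans hi hmk.
    by rewrite Hk1 // ht' // ltnW.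
  exists u; last by rewrite /fb hu.
  apply: Hb; have := Hm u hA => /andP [? ?]; apply/andP; split => //; lra.
- move=> x; have [q hq] := branch_exists x.
  have [t [tb _]] := hS1 x q 0%N hq.
  have [r hr] := HSurj t; exists r.
  by rewrite /fb hr; apply: (bb_uniq (g_bb t)).
Qed.

End Backward.

Theorem theorem1 (X : topologicalType) (hX : hausdorff_space X) :
  continuous_open_image_of_sorgenfrey X <->
  exists V : seq nat -> set X, sorgenfrey_base V.
Proof.
split.
  by move=> [f [fc fo fs]]; exists (Vf f); apply: forward.
by move=> [V HV]; exact: (@backward X hX V HV).
Qed.
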